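(* Let $V$ be a real vector space of finite even dimension with nondegenerate quadratic form $Q$, and let $\rho$ be a nonzero $c$-compatible representation of $\mathbb{C}l(V)$ on a finite-dimensional complex vector space $K$ with nondegenerate hermitian form $(\cdot,\cdot)$. Let $\sigma=\mathrm{Ad}_b\circ c$ be an admissible real structure with $b$ in the complex Clifford group. For $x\in\mathbb{C}l(V)$ let $(\cdot,\cdot)_x=(\cdot,\rho(x)\cdot)$. Then $(\cdot,\cdot)_x$ is a $\sigma$-compatible Krein product on $K$ iff $x=x^\times$ and $x$ is proportional to $b^{-1}$.
   Context: $Cl(V,Q)$ is the real Clifford algebra with $v^2=+Q(v)$, $\mathbb{C}l(V)$ its complexification with complex conjugation $c$; $T$ the linear antiautomorphism restricting to the identity on $V$; $a^\times=c(T(a))$; for a real structure $\sigma$, $a^{\times_\sigma}=\sigma(T(a))$. A real structure is an involutive antilinear algebra automorphism stabilizing $V^{\mathbb{C}}$; admissible means commuting with $c$; $\mathrm{Ad}_b(a)=bab^{-1}$; the complex Clifford group consists of invertible $g$ with $gV^{\mathbb{C}}g^{-1}\subset V^{\mathbb{C}}$. $\rho$ is $c$-compatible if $(\rho(a)\psi,\phi)=(\psi,\rho(a^\times)\phi)$ for all $a,\psi,\phi$. A Krein product is a nondegenerate hermitian form $(\cdot,\cdot)'$; it is $\sigma$-compatible if $(\rho(a)\psi,\phi)'=(\psi,\rho(a^{\times_\sigma})\phi)'$ for all $a,\psi,\phi$. ''Proportional'' means a nonzero complex multiple. *)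

(* Defs.v *)
(* Concrete model of the complexified Clifford algebra
   of R^{p,q} (orthonormal basis e_i with e_i^2 = Q(e_i) = +-1). *)
From HB Require Import structures.
From mathcomp Require Import all_boot all_order all_algebra.
Set Implicit Arguments. Unset Strict Implicit. Unset Printing Implicit Defensive.
Import Order.TTheory GRing.Theory Num.Theory.
Local Open Scope ring_scope.

Section Clifford.
Variables (C : numClosedFieldType) (n : nat).
(* s i = true iff Q(e_i) = +1, s i = false iff Q(e_i) = -1 *)
Variable s : 'I_n -> bool.

(* elements of Cl(V)^C: coefficients on the basis e_A, A subset of {0..n-1},
   e_A = e_{a1} ... e_{ak} with a1 < ... < ak *)
Definition cl := {ffun {set 'I_n} -> C}.

Definition cl_basis (A : {set 'I_n}) : cl := [ffun B => (B == A)%:R].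
Definition cl_one : cl := cl_basis set0.
Definition cl_add (x y : cl) : cl := [ffun A => x A + y A].
Definition cl_scale (l : C) (x : cl) : cl := [ffun A => l * x A].

Definition symd (A B : {set 'I_n}) := (A :\: B) :|: (B :\: A).

(* e_A e_B = cl_sign A B e_{A symd B} *)
Definition cl_sign (A B : {set 'I_n}) : C :=
  (-1) ^+ #|[set p : 'I_n * 'I_n | (p.1 \in A) && (p.2 \in B) && (p.2 < p.1)%N]|
  * \prod_(i in A :&: B) (if s i then 1 else -1).

Definition cl_mul (x y : cl) : cl :=
  [ffun D => \sum_(A : {set 'I_n}) \sum_(B : {set 'I_n} | symd A B == D)
               x A * y B * cl_sign A B].

(* membership in V^C = span of the e_i *)
Definition in_VC (x : cl) : Prop := forall A : {set 'I_n}, #|A| != 1%N -> x A = 0.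

(* complex conjugation c (the basis e_A is real) *)
Definition cl_conj (x : cl) : cl := [ffun A : {set 'I_n} => (x A)^*].
(* T : the linear antiautomorphism that is the identity on V
   (e_{a1}...e_{ak} |-> e_{ak}...e_{a1} = (-1)^(k(k-1)/2) e_A) *)
Definition cl_T (x : cl) : cl := [ffun A : {set 'I_n} => (-1) ^+ 'C(#|A|, 2) * x A].
Definition cl_times (x : cl) : cl := cl_conj (cl_T x).

Definition clifford_group (b binv : cl) : Prop :=
  cl_mul b binv = cl_one /\ cl_mul binv b = cl_one /\
  forall v, in_VC v -> in_VC (cl_mul (cl_mul b v) binv).

Definition Ad_c (b binv : cl) (a : cl) : cl := cl_mul (cl_mul b (cl_conj a)) binv.

Definition real_structure (sg : cl -> cl) : Prop :=
  (forall x y, sg (cl_add x y) = cl_add (sg x) (sg y)) /\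
  (forall l x, sg (cl_scale l x) = cl_scale (l^*) (sg x)) /\
  (forall x y, sg (cl_mul x y) = cl_mul (sg x) (sg y)) /\
  sg cl_one = cl_one /\
  (forall x, sg (sg x) = x) /\
  (forall x, in_VC x -> in_VC (sg x)).

Definition admissible (sg : cl -> cl) : Prop :=
  forall x, sg (cl_conj x) = cl_conj (sg x).

Definition cl_times_sigma (sg : cl -> cl) (x : cl) : cl := sg (cl_T x).

Variable m : nat.

Definition is_rep (rho : cl -> 'M[C]_m) : Prop :=
  (forall x y, rho (cl_add x y) = rho x + rho y) /\
  (forall l x, rho (cl_scale l x) = l *: rho x) /\
  (forall x y, rho (cl_mul x y) = rho x *m rho y) /\
  rho cl_one = 1%:M.

(* hermitian forms, linear in the second argument *)
Definition herm_form (f : 'cV[C]_m -> 'cV[C]_m -> C) : Prop :=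
  (forall psi phi1 phi2, f psi (phi1 + phi2) = f psi phi1 + f psi phi2) /\
  (forall psi l phi, f psi (l *: phi) = l * f psi phi) /\
  (forall psi phi, f psi phi = (f phi psi)^*).

Definition nondeg_form (f : 'cV[C]_m -> 'cV[C]_m -> C) : Prop :=
  forall psi, (forall phi, f psi phi = 0) -> psi = 0.

Definition krein_product (f : 'cV[C]_m -> 'cV[C]_m -> C) : Prop :=
  herm_form f /\ nondeg_form f.

Definition c_compatible (rho : cl -> 'M[C]_m) (f : 'cV[C]_m -> 'cV[C]_m -> C) : Prop :=
  forall a psi phi, f (rho a *m psi) phi = f psi (rho (cl_times a) *m phi).

Definition sigma_compatible (sg : cl -> cl) (rho : cl -> 'M[C]_m)
  (f : 'cV[C]_m -> 'cV[C]_m -> C) : Prop :=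
  forall a psi phi, f (rho a *m psi) phi = f psi (rho (cl_times_sigma sg a) *m phi).

Definition form_at (rho : cl -> 'M[C]_m) (f : 'cV[C]_m -> 'cV[C]_m -> C) (x : cl) :=
  fun psi phi => f psi (rho x *m phi).

End Clifford.

(* Main.v *)
Require Import Defs.
From HB Require Import structures.
From mathcomp Require Import all_boot all_order all_algebra.
From mathcomp Require Import zify ring.
Set Implicit Arguments. Unset Strict Implicit. Unset Printing Implicit Defensive.
Import Order.TTheory GRing.Theory Num.Theory.
Local Open Scope ring_scope.

Section Comb.
Variables (C : numClosedFieldType) (n : nat) (s : 'I_n -> bool).

Definition gsymd (T : finType) (A B : {set T}) := (A :\: B) :|: (B :\: A).

Lemma in_gsymd (T : finType) (A B : {set T}) x : (x \in gsymd A B) = (x \in A) (+) (x \in B).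
Proof. by rewrite !inE; case: (x \in A); case: (x \in B). Qed.

Lemma card_gsymd (T : finType) (A B : {set T}) :
  (#|gsymd A B| + 2 * #|A :&: B| = #|A| + #|B|)%N.
Proof.
have dj : #|(A :\: B) :&: (B :\: A)| = 0%N.
  apply/eqP; rewrite cards_eq0; apply/eqP/setP => x; rewrite !inE.
  by case: (x \in A); case: (x \in B).
have := cardsU (A :\: B) (B :\: A); rewrite dj subn0 /gsymd => ->.
rewrite -(cardsID B A) -(cardsID A B) [B :&: A]setIC; lia.
Qed.

Definition sg k : C := (-1) ^+ k.

Lemma sgD a b : sg (a + b) = sg a * sg b. Proof. by rewrite /sg exprD. Qed.
Lemma sg2 c : sg (2 * c) = 1. Proof. by rewrite /sg mulnC exprM sqrr_sign. Qed.

Lemma sgM a b : sg (a * b) = sg a ^+ b. Proof. by rewrite /sg exprM. Qed.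

Lemma sg_gsymd (T : finType) (A B : {set T}) : sg #|gsymd A B| = sg #|A| * sg #|B|.
Proof. by rewrite -sgD -card_gsymd sgD sg2 mulr1. Qed.

Definition Inv (A B : {set 'I_n}) :=
  [set p : 'I_n * 'I_n | (p.1 \in A) && (p.2 \in B) && (p.2 < p.1)%N].

Lemma Inv_symd X Y Z : Inv (symd X Y) Z = gsymd (Inv X Z) (Inv Y Z).
Proof.
apply/setP => p; rewrite in_gsymd !inE.
by case: (p.1 \in X); case: (p.1 \in Y); case: (p.2 \in Z); case: (p.2 < p.1)%N.
Qed.

Lemma card_Inv_nat (P : 'I_n -> 'I_n -> bool) :
  #|[set p : 'I_n * 'I_n | P p.1 p.2]| = (\sum_a \sum_b (P a b : nat))%N.
Proof.
rewrite -sum1_card pair_bigA /= big_mkcond /=.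
by apply: eq_bigr => p _; rewrite inE; case: (P _ _).
Qed.

Lemma Inv_count S D :
  (#|Inv S D| + #|Inv D S| + #|S :&: D| = #|S| * #|D|)%N.
Proof.
rewrite /Inv (card_Inv_nat (fun a b => (a \in S) && (b \in D) && (b < a)%N)).
rewrite (card_Inv_nat (fun a b => (a \in D) && (b \in S) && (b < a)%N)).
rewrite [X in (_ + X + _)%N]exchange_big /=.
have -> : #|S :&: D| = (\sum_a \sum_b ((a \in S) && (b \in D) && (nat_of_ord a == nat_of_ord b) : nat))%N.
  rewrite -sum1_card big_mkcond /=; apply: eq_bigr => a _.
  rewrite (bigD1 a) //= eqxx big1 ?addn0.
    by rewrite inE; case: (a \in S); case: (a \in D).
  by move=> b /negbTE nba; rewrite eq_sym (inj_eq val_inj) nba !andbF.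
rewrite -!big_split /= -!sum1_card [RHS]big_distrl /= [RHS]big_mkcond /=.
apply: eq_bigr => a _; rewrite -!big_split /=.
case: (a \in S) => /=; last by rewrite big1 // => b; rewrite !andbF.
rewrite mul1n [RHS]big_mkcond /=. apply: eq_bigr => b _.
case: (b \in D) => //=; case: ltngtP => //=.
Qed.

Definition q (X : {set 'I_n}) : C := \prod_(i in X) (if s i then 1 else -1).

Lemma cl_signE A B : cl_sign C s A B = sg #|Inv A B| * q (A :&: B).
Proof. by []. Qed.

Lemma q_split S D : q (S :&: D) * q (S :\: D) = q S.
Proof. by rewrite /q [in RHS](big_setID D). Qed.

Lemma q_sq S : q S * q S = 1.
Proof.
rewrite /q -expr2 -prodrXl; apply: big1 => i _.
by case: (s i); rewrite ?expr1n ?sqrrN ?expr1n.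
Qed.

Lemma sg_sq k : sg k * sg k = 1.
Proof. by rewrite -sgD addnn -mul2n sg2. Qed.

Lemma F_eq S D :
  cl_sign C s S S * cl_sign C s S D * cl_sign C s (symd S D) S
  = sg (#|S| * #|D|) * sg #|S :&: D|.
Proof.
rewrite !cl_signE Inv_symd sg_gsymd.
have -> : symd S D :&: S = S :\: D.
  by apply/setP => x; rewrite !inE; case: (x \in S); case: (x \in D).
rewrite setIid.
have H : sg #|Inv S D| * sg #|Inv D S| = sg (#|S| * #|D|) * sg #|S :&: D|.
  by rewrite -Inv_count !sgD -mulrA sg_sq mulr1.
rewrite -H.
transitivity ((sg #|Inv S S| * sg #|Inv S S|) * (sg #|Inv S D| * sg #|Inv D S|) *
   (q S * (q (S :&: D) * q (S :\: D)))).
  by ring.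
by rewrite q_split q_sq sg_sq !mul1r mulr1.
Qed.

Definition G (D S : {set 'I_n}) := sg (#|S| * #|D|) * sg #|S :&: D|.

Lemma gsymdK (T : finType) (A B : {set T}) : gsymd (gsymd A B) B = A.
Proof. by apply/setP => x; rewrite !in_gsymd; case: (x \in A); case: (x \in B). Qed.


Lemma sum_G D : ~~ odd n ->
  \sum_(S : {set 'I_n}) G D S = if D == set0 then (#|{set 'I_n}|)%:R else 0.
Proof.
move=> hn; case: eqP => [->|/eqP D0].
  rewrite -sumr_const; apply: eq_bigr => S _.
  by rewrite /G setI0 cards0 muln0 /sg expr0 mulr1.
have [i Hi] : exists i, sg #|D| * sg #|[set i] :&: D| = -1.
  case: (boolP (odd #|D|)) => oD.
    case: (pickP (fun i => i \notin D)) => [i iD|allD].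
      exists i; rewrite {1}/sg -signr_odd oD expr1.
      have -> : [set i] :&: D = set0.
        by apply/setP => x; rewrite !inE; case: eqP => // ->; rewrite (negbTE iD).
      by rewrite cards0 /sg expr0 mulr1.
    exfalso; have: D = setT.
      by apply/setP => x; rewrite inE; have := allD x; rewrite /= => /negbFE.
    by move=> DT; move: oD hn; rewrite DT cardsT card_ord => ->.
  case/set0Pn: D0 => i iD; exists i.
  rewrite {1}/sg -signr_odd (negbTE oD) expr0 mul1r.
  have -> : [set i] :&: D = [set i].
    by apply/setP => x; rewrite !inE; case: eqP => // ->.
  by rewrite cards1 /sg expr1.
set t := fun S : {set 'I_n} => gsymd S [set i].
have tinj : injective t by apply: (can_inj (g := t)) => S; rewrite /t gsymdK.
have Gt S : G D (t S) = - G D S.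
  rewrite /G /t.
  have -> : gsymd S [set i] :&: D = gsymd (S :&: D) ([set i] :&: D).
    by apply/setP => x; rewrite !(in_gsymd, inE); case: (x \in S); case: (x == i); case: (x \in D).
  rewrite !sgM !sg_gsymd exprMn cards1 -(sgM 1) mul1n.
  transitivity (sg #|S| ^+ #|D| * sg #|S :&: D| * (sg #|D| * sg #|[set i] :&: D|)); first by ring.
  by rewrite Hi; ring.
have : \sum_S G D S = - \sum_S G D S.
  rewrite -sumrN [LHS](reindex_inj tinj) /=; apply: eq_bigr => S _; exact: Gt.
by move/eqP; rewrite -addr_eq0 -mulr2n mulrn_eq0 /= => /eqP.
Qed.
End Comb.
Section Cl2.
Variables (C : numClosedFieldType) (n : nat) (s : 'I_n -> bool).
Local Notation e := (cl_basis C).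
Local Notation sign := (cl_sign C s).

Lemma in_symd (A B : {set 'I_n}) x : (x \in symd A B) = (x \in A) (+) (x \in B).
Proof. exact: in_gsymd. Qed.

Lemma symdKl (A B : {set 'I_n}) : symd A (symd A B) = B.
Proof. by apply/setP => x; rewrite !in_symd; case: (x \in A); case: (x \in B). Qed.
Lemma symdC (A B : {set 'I_n}) : symd A B = symd B A.
Proof. by apply/setP => x; rewrite !in_symd; case: (x \in A); case: (x \in B). Qed.
Lemma symd0 (A : {set 'I_n}) : symd A set0 = A.
Proof. by apply/setP => x; rewrite !in_symd inE; case: (x \in A). Qed.

Lemma symd_eq (S B E : {set 'I_n}) : (symd S B == E) = (B == symd S E).
Proof.
apply/eqP/eqP => [<-|->]; by rewrite symdKl.
Qed.

Lemma basisE (S B : {set 'I_n}) : e S B = (B == S)%:R.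
Proof. by rewrite /cl_basis ffunE. Qed.

Lemma sum_basis (P : pred {set 'I_n}) S (g : {set 'I_n} -> C) :
  \sum_(B | P B) e S B * g B = if P S then g S else 0.
Proof.
rewrite big_mkcond (bigD1 S) //= basisE eqxx mul1r big1 ?addr0 //.
move=> B /negbTE BS; rewrite basisE BS mul0r; by case: (P B).
Qed.

Lemma mul_basis_l S (z : cl C n) E :
  cl_mul s (e S) z E = z (symd S E) * sign S (symd S E).
Proof.
rewrite /cl_mul ffunE (bigD1 S) //= [X in _ + X]big1 ?addr0.
  rewrite basisE eqxx (eq_bigl (fun B => B == symd S E)); last by move=> B; rewrite symd_eq.
  by rewrite big_pred1_eq mul1r.
move=> A /negbTE AS; apply: big1 => B _; by rewrite basisE AS !mul0r.
Qed.

Lemma mul_basis_r (z : cl C n) S E :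
  cl_mul s z (e S) E = z (symd E S) * sign (symd E S) S.
Proof.
rewrite /cl_mul ffunE.
rewrite (eq_bigr (fun A => if symd A S == E then z A * sign A S else 0)); last first.
  move=> A _; rewrite (eq_bigr (fun B => e S B * (z A * sign A B))); last by move=> B _; ring.
  by rewrite sum_basis.
rewrite -big_mkcond (eq_bigl (fun A => A == symd E S)); last by move=> A; rewrite symdC symd_eq symdC.
by rewrite big_pred1_eq.
Qed.

Lemma conj_basis S (z : cl C n) D :
  cl_mul s (cl_mul s (e S) z) (e S) D = z D * sign S D * sign (symd S D) S.
Proof. by rewrite mul_basis_r mul_basis_l [symd D S]symdC symdKl mulrA. Qed.

Definition cl0 : cl C n := [ffun _ => 0].

Definition Pop (z : cl C n) : cl C n :=
  \big[@cl_add C n/cl0]_(S : {set 'I_n}) cl_scale (sign S S) (cl_mul s (cl_mul s (e S) z) (e S)).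

Lemma Pop_coef z D : Pop z D = \sum_S sign S S * cl_mul s (cl_mul s (e S) z) (e S) D.
Proof.
rewrite /Pop (big_morph (fun x : cl C n => x D) (id1 := 0) (op1 := +%R)).
- by apply: eq_bigr => S _; rewrite ffunE.
- by move=> x y; rewrite ffunE.
- by rewrite ffunE.
Qed.

Lemma Pop_eq z : ~~ odd n -> Pop z = cl_scale (#|{set 'I_n}|%:R * z set0) (cl_one C n).
Proof.
move=> hn; apply/ffunP => D; rewrite Pop_coef !ffunE.
rewrite (eq_bigr (fun S => z D * G C D S)); last first.
  by move=> S _; rewrite conj_basis /G -(F_eq C s); ring.
rewrite -mulr_sumr sum_G //.
case: eqP => [->|_]; by rewrite ?eqxx ?mulr0 ?mulr1 // mulrC.
Qed.

Lemma sign_neq0 S : sign S S != 0.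
Proof.
apply/negP => /eqP H.
have : sign S S * sign S S = 1.
  rewrite cl_signE; transitivity ((sg C #|Inv S S| * sg C #|Inv S S|) * (q C s (S :&: S) * q C s (S :&: S))); first by ring.
  by rewrite sg_sq q_sq mulr1.
by rewrite H mul0r => /eqP; rewrite eq_sym oner_eq0.
Qed.

Variables (m : nat) (rho : cl C n -> 'M[C]_m).
Hypothesis hrep : is_rep s rho.

Lemma rho_scale l x : rho (cl_scale l x) = l *: rho x.
Proof. by case: hrep => _ [h _]. Qed.
Lemma rho_add x y : rho (cl_add x y) = rho x + rho y.
Proof. by case: hrep => h _. Qed.
Lemma rho_mul x y : rho (cl_mul s x y) = rho x *m rho y.
Proof. by case: hrep => _ [_ [h _]]. Qed.
Lemma rho_one : rho (cl_one C n) = 1%:M.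
Proof. by case: hrep => _ [_ [_ h]]. Qed.

Lemma rho0 : rho cl0 = 0.
Proof.
have -> : cl0 = cl_scale 0 cl0 by apply/ffunP => A; rewrite !ffunE mul0r.
by rewrite rho_scale scale0r.
Qed.

Lemma rho_Pop z : rho (Pop z) = \sum_S sign S S *: (rho (e S) *m rho z *m rho (e S)).
Proof.
rewrite /Pop (big_morph rho (id1 := 0) (op1 := +%R) rho_add rho0).
by apply: eq_bigr => S _; rewrite rho_scale !rho_mul.
Qed.

Lemma faithful (i0 : 'I_m) y : ~~ odd n -> rho y = 0 -> forall A, y A = 0.
Proof.
move=> hn hy A; apply/eqP/negP => /negP yA.
set w := cl_mul s (e A) y.
have w0 : w set0 = y A * sign A A by rewrite /w mul_basis_l symd0.
have : rho (Pop w) = 0.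
  rewrite rho_Pop big1 // => S _; by rewrite /w rho_mul hy !(mulmx0, mul0mx) scaler0.
rewrite Pop_eq // rho_scale rho_one => /matrixP /(_ i0 i0).
rewrite !mxE eqxx mulr1 w0 => /eqP; apply/negP.
rewrite mulf_neq0 ?(mulf_neq0 yA (sign_neq0 A)) // pnatr_eq0 -lt0n.
by apply/card_gt0P; exists set0.
Qed.

Lemma central z : ~~ odd n -> (forall y, rho y *m rho z = rho z *m rho y) ->
  rho z = z set0 *: 1%:M.
Proof.
move=> hn hz.
set N : C := #|{set 'I_n}|%:R.
have N0 : N != 0 by rewrite pnatr_eq0 -lt0n; apply/card_gt0P; exists set0.
have h1 : rho (Pop z) = N *: rho z.
  rewrite rho_Pop.
  transitivity ((\sum_S sign S S *: (rho (e S) *m rho (cl_one C n) *m rho (e S))) *m rho z).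
    rewrite mulmx_suml; apply: eq_bigr => S _.
    by rewrite rho_one mulmx1 -scalemxAl -!mulmxA hz.
  rewrite -rho_Pop Pop_eq // rho_scale rho_one ffunE eqxx mulr1 -scalemxAl mul1mx //.
have : (N * z set0) *: (1%:M : 'M[C]_m) = N *: rho z.
  by rewrite -h1 Pop_eq // rho_scale rho_one.
move/(congr1 (fun M => N^-1 *: M)); rewrite !scalerA mulrA mulVf // mul1r scale1r.
by move=> ->.
Qed.
End Cl2.
Unset Implicit Arguments.
Lemma timesK (C : numClosedFieldType) (n : nat) (y : cl C n) :
  cl_times (cl_T (cl_conj y)) = y.
Proof.
apply/ffunP => A; rewrite /cl_times /cl_conj /cl_T !ffunE.
by rewrite mulrA -expr2 sqrr_sign mul1r conjCK.
Qed.

Lemma mx_ext (C : numClosedFieldType) (m : nat) (A B : 'M[C]_m) :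
  (forall phi : 'cV[C]_m, A *m phi = B *m phi) -> A = B.
Proof.
move=> H; apply/matrixP => i j.
have := H (delta_mx j 0); rewrite -!colE => /matrixP /(_ i 0).
by rewrite !mxE.
Qed.

Theorem lemma5 (C : numClosedFieldType) (n : nat) (s : 'I_n -> bool) (m : nat)
  (rho : cl C n -> 'M[C]_m) (f : 'cV[C]_m -> 'cV[C]_m -> C) (b binv : cl C n) :
  ~~ odd n ->
  is_rep s rho -> (exists a, rho a != 0) ->
  herm_form f -> nondeg_form f ->
  c_compatible rho f ->
  clifford_group s b binv ->
  real_structure s (Ad_c s b binv) -> admissible (Ad_c s b binv) ->
  forall x : cl C n,
    (krein_product (form_at rho f x) /\
     sigma_compatible (Ad_c s b binv) rho (form_at rho f x))
    <->
    (x = cl_times x /\ exists l : C, l != 0 /\ x = cl_scale l binv).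
Proof.
move=> hn hrep [a0 ha0] [fadd [fscale fsym]] hnd hc [hbb [hbb' _]] _ _ x.
have [i0 _] : exists i0 : 'I_m, true.
  case: (pickP (fun _ : 'I_m => true)) => [i0 _|h]; first by exists i0.
  exfalso; move/eqP: ha0; apply; apply/matrixP => i j; by have := h i.
have f0 psi : f psi 0 = 0.
  by have := fscale psi 0 0; rewrite scale0r mul0r.
have fsub psi u v : f psi (u - v) = f psi u - f psi v.
  rewrite fadd; congr (_ + _); rewrite -scaleN1r fscale; ring.
have fz w : (forall psi, f psi w = 0) -> w = 0.
  by move=> H; apply: hnd => phi; rewrite fsym H conjC0.
have fext (A B : 'M[C]_m) : (forall psi phi, f psi (A *m phi) = f psi (B *m phi)) -> A = B.
  move=> H; apply: mx_ext => phi; apply/eqP; rewrite -subr_eq0; apply/eqP.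
  by apply: fz => psi; rewrite fsub H subrr.
have Rbb : rho b *m rho binv = 1%:M by rewrite -(rho_mul hrep) hbb (rho_one hrep).
have Rbb' : rho binv *m rho b = 1%:M by rewrite -(rho_mul hrep) hbb' (rho_one hrep).
have rhoAd a : rho (Ad_c s b binv a) = rho b *m rho (cl_conj a) *m rho binv.
  by rewrite /Ad_c !(rho_mul hrep).
have faith (u v : cl C n) : rho u = rho v -> u = v.
  move=> H; apply/ffunP => A.
  have := faithful hrep i0 (y := cl_add u (cl_scale (-1) v)) hn.
  rewrite (rho_add hrep) (rho_scale hrep) scaleN1r H subrr => /(_ erefl A).
  rewrite !ffunE => /eqP; rewrite mulN1r subr_eq0 => /eqP //.
split.
- move=> [[[gadd [gscale gsym]] gnd] hs].
  have e1 : rho x = rho (cl_times x).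
    apply: fext => psi phi.
    have := gsym psi phi; rewrite /form_at => ->.
    by rewrite -fsym hc.
  have e2 a : rho (cl_times a) *m rho x = rho x *m rho (Ad_c s b binv (cl_T a)).
    apply: fext => psi phi.
    have := hs a psi phi; rewrite /form_at hc /cl_times_sigma.
    by rewrite !mulmxA => ->.
  have e3 y : rho y *m (rho x *m rho b) = (rho x *m rho b) *m rho y.
    have := e2 (cl_T (cl_conj y)); rewrite timesK rhoAd.
    have -> : cl_conj (cl_T (cl_T (cl_conj y))) = y by exact: timesK.
    move/(congr1 (fun M => M *m rho b)).
    by rewrite !mulmxA -[_ *m rho binv *m rho b]mulmxA Rbb' mulmx1 => ->.
  set c := cl_mul s x b set0.
  have e4 : rho x *m rho b = c *: 1%:M.
    rewrite -(rho_mul hrep); apply: (central hrep) => // y.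
    by rewrite (rho_mul hrep) e3.
  have e5 : rho x = rho (cl_scale c binv).
    rewrite (rho_scale hrep) -[rho x]mulmx1 -Rbb mulmxA e4 -scalemxAl mul1mx //.
  split; first exact: faith.
  exists c; split; last exact: faith.
  apply/eqP => c0; move: e5; rewrite c0 (rho_scale hrep) scale0r => X0.
  have : delta_mx i0 0 = 0 :> 'cV[C]_m.
    by apply: gnd => phi; rewrite /form_at X0 mul0mx f0.
  move/matrixP /(_ i0 0).
  by rewrite !mxE !eqxx /= => /eqP; rewrite oner_eq0.
- move=> [hx [l [l0 hxl]]].
  have X : rho x = l *: rho binv by rewrite hxl (rho_scale hrep).
  split; first split.
  + split; [|split] => /=.
    * by move=> psi phi1 phi2; rewrite /form_at mulmxDr fadd.
    * by move=> psi k phi; rewrite /form_at -scalemxAr fscale.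
    * by move=> psi phi; rewrite /form_at -fsym hc -hx.
  + move=> psi H; apply: hnd => phi.
    have := H (l^-1 *: (rho b *m phi)); rewrite /form_at X -scalemxAr -scalemxAl scalerA.
    by rewrite mulVf // scale1r mulmxA Rbb' mul1mx.
  + move=> a psi phi; rewrite /form_at hc /cl_times_sigma rhoAd !mulmxA; congr (f psi (_ *m phi)).
    rewrite X -!scalemxAl -!scalemxAr; congr (_ *: _).
    by rewrite Rbb' mul1mx.
Qed.
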